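(* Let $n\ge 1$ and let $w\in\mathbb{R}^{[n]\times[n]}$ be a real matrix. Let $(\beta_1,\dots,\beta_n)$ be the numbers $\left(\max_{j\in[n]}(w_{i,j}-w_{i,i})\right)_{i\in[n]}$ arranged in non-increasing order, i.e. $\beta_1\ge\beta_2\ge\dots\ge\beta_n$. Let $\mathbf{p}^*=(p^*_1,\dots,p^*_n)$ be the minimum subsidy vector for $w$. Then for every $r=1,2,\dots,n$, the $r$-th largest value among $p^*_1,\dots,p^*_n$ is at most $\sum_{\ell=1}^{n-r}\beta_\ell$ (an empty sum being $0$).
   Context: For a permutation $\sigma$ of $[n]=\{1,\dots,n\}$ let $P^\sigma=\{\mathbf{p}\in\mathbb{R}_{\ge0}^n \mid w_{i,\sigma(i)}+p_{\sigma(i)}\ge w_{i,j}+p_j \ \forall i,j\in[n]\}$. A permutation $\sigma$ is a maximum weight permutation for $w$ if it maximizes $\sum_{i=1}^n w_{i,\sigma(i)}$. For a maximum weight permutation $\sigma$, $P^\sigma$ is nonempty and has a unique coordinatewise-minimal element; this element does not depend on the choice of the maximum weight permutation $\sigma$, and it is called the minimum subsidy vector for $w$. (The identity permutation need not be a maximum weight permutation.) *)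

(* Defs.v *)
From mathcomp Require Import all_boot all_order all_algebra all_fingroup.
Set Implicit Arguments. Unset Strict Implicit. Unset Printing Implicit Defensive.
Import Order.TTheory GRing.Theory Num.Theory.
Local Open Scope ring_scope.

Definition perm_weight (R : realFieldType) (n : nat) (w : 'M[R]_n) (s : 'S_n) : R :=
  \sum_(i < n) w i (s i).

Definition is_max_weight_perm (R : realFieldType) (n : nat) (w : 'M[R]_n) (s : 'S_n) : Prop :=
  forall s' : 'S_n, perm_weight w s' <= perm_weight w s.

Definition in_Psigma (R : realFieldType) (n : nat) (w : 'M[R]_n) (s : 'S_n)
    (p : 'I_n -> R) : Prop :=
  (forall i, 0 <= p i) /\
  (forall i j : 'I_n, w i j + p j <= w i (s i) + p (s i)).

Definition is_min_elt_Psigma (R : realFieldType) (n : nat) (w : 'M[R]_n) (s : 'S_n)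
    (p : 'I_n -> R) : Prop :=
  in_Psigma w s p /\ (forall q, in_Psigma w s q -> forall i, p i <= q i).

(* beta_i = max_j (w_{i,j} - w_{i,i}); the term j = i equals 0, so seeding the
   iterated max with 0 does not change its value. *)
Definition beta (R : realFieldType) (n : nat) (w : 'M[R]_n) (i : 'I_n) : R :=
  \big[Num.max/0]_(j < n) (w i j - w i i).

Definition sort_desc (R : realFieldType) (n : nat) (f : 'I_n -> R) : seq R :=
  sort (fun x y : R => y <= x) [seq f i | i <- enum 'I_n].

(* Main.v *)
Require Import Defs.
From mathcomp Require Import all_boot all_order all_algebra all_fingroup.
From mathcomp Require Import zify lra.
Import Order.TTheory GRing.Theory Num.Theory.
Local Open Scope ring_scope.
Set Implicit Arguments. Unset Strict Implicit.

Section S.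
Variable R : realFieldType.

Lemma size_sdesc n (f : 'I_n -> R) : size (sort_desc f) = n.
Proof. by rewrite /sort_desc size_sort size_map size_enum_ord. Qed.

Lemma sdesc_sorted n (f : 'I_n -> R) : sorted (fun x y : R => y <= x) (sort_desc f).
Proof. apply: sort_sorted => x y; exact: le_total. Qed.

Lemma sdesc_nth n (f : 'I_n -> R) i j : (i <= j)%N -> (j < n)%N ->
  nth 0 (sort_desc f) j <= nth 0 (sort_desc f) i.
Proof.
move=> ij jn.
have tr : transitive (fun x y : R => y <= x).
  by move=> x y z /= h1 h2; exact: le_trans h2 h1.
have := sorted_leq_nth tr (fun x : R => lexx x) 0 (sdesc_sorted f).
move=> H; apply: H; rewrite ?inE ?size_sdesc //.
exact: leq_ltn_trans ij jn.
Qed.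

Lemma sdesc_perm n (f : 'I_n -> R) : perm_eq (sort_desc f) [seq f i | i <- enum 'I_n].
Proof. by rewrite /sort_desc perm_sort. Qed.


Lemma sum_sdesc n (f : 'I_n -> R) (g : R -> R) :
  \sum_(i < n) g (f i) = \sum_(l < n) g (nth 0 (sort_desc f) l).
Proof.
transitivity (\sum_(0 <= l < size (sort_desc f)) g (nth 0 (sort_desc f) l)); last first.
  by rewrite size_sdesc big_mkord.
rewrite -(@big_nth _ _ _ _ 0 (sort_desc f) xpredT g).
by rewrite (perm_big _ (sdesc_perm f)) big_map big_enum.
Qed.

Lemma sum_top n (f : 'I_n -> R) (A : {set 'I_n}) :
  \sum_(y in A) f y <= \sum_(l < #|A|) nth 0 (sort_desc f) l.
Proof.
have mn : (#|A| <= n)%N by apply: leq_trans (max_card _) _; rewrite card_ord.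
have [A0|Apos] := eqVneq #|A| 0%N.
  rewrite A0 big_ord0; move/eqP: A0; rewrite cards_eq0 => /eqP ->.
  by rewrite big_set0.
have [m' Em] : exists m', #|A| = m'.+1 by exists #|A|.-1; rewrite prednK // lt0n.
rewrite Em; rewrite Em in mn. set s := sort_desc f.
set c := nth 0 s m'.
pose pos (x : R) := Num.max (x - c) 0.
have h1 : \sum_(y in A) f y <= \sum_(y in A) pos (f y) + m'.+1%:R * c.
  rewrite -Em -sum1_card natr_sum mulr_suml -big_split /=.
  apply: ler_sum => y _; rewrite mul1r /pos -lerBlDr.
  by rewrite le_max lexx.
have h2 : \sum_(y in A) pos (f y) <= \sum_(y < n) pos (f y).
  rewrite [X in _ <= X](bigID (fun y => y \in A)) /= lerDl.
  by apply: sumr_ge0 => i _; rewrite /pos le_max lexx orbT.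
rewrite sum_sdesc -/s in h2.
have h4 : \sum_(l < n) pos s`_l = \sum_(l < m'.+1) (s`_l - c).
  rewrite -(big_mkord xpredT (fun l => pos s`_l)) -(big_mkord xpredT (fun l => s`_l - c)).
  rewrite (big_cat_nat _ (n:=m'.+1)) //=.
  rewrite [X in _ + X]big_nat_cond [X in _ + X]big1 ?addr0; last first.
    move=> l /andP[/andP[ml ln] _]; rewrite /pos.
    rewrite max_r // subr_le0; apply: sdesc_nth => //; exact: ltnW.
  apply: eq_big_nat => l /andP[_ lm]; rewrite /pos max_l //.
  rewrite subr_ge0; apply: sdesc_nth => //; exact: leq_ltn_trans mn.
apply: (le_trans h1); apply: (le_trans (lerD h2 (lexx _))).
by rewrite h4 sumrB sumr_const card_ord mulr_natl subrK lexx.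
Qed.

Lemma nth_le n (f : 'I_n -> R) (c : R) r : (0 < r)%N -> (r <= n)%N ->
  (n - r < #|[set x | (f x <= c)%R]|)%N -> nth 0 (sort_desc f) r.-1 <= c.
Proof.
move=> r0 rn hc; rewrite leNgt; apply/negP => H.
pose g := fun x : R => if c < x then (1 : R) else 0.
have e1 : \sum_(i < n) g (f i) = #|[set x | c < f x]|%:R.
  rewrite -sum1_card natr_sum [RHS]big_mkcond /=; apply: eq_bigr => i _.
  by rewrite inE /g; case: (c < f i).
have e2 : (r%:R : R) <= \sum_(l < n) g (nth 0 (sort_desc f) l).
  rewrite -(big_mkord xpredT (fun l => g (nth 0 (sort_desc f) l))).
  rewrite (big_cat_nat _ (n:=r)) //= -[X in X <= _]addr0 lerD //; last first.
    by apply: sumr_ge0 => i _; rewrite /g; case: ifP.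
  rewrite (@eq_big_nat _ _ _ 0 r _ (fun _ => 1)); last first.
    move=> l /andP[_ lr]; rewrite /g ifT //.
    apply: (lt_le_trans H); apply: sdesc_nth; first by rewrite -ltnS prednK.
    by rewrite prednK // leq_trans ?ltnSn.
  by rewrite sumr_const_nat subn0.
rewrite -sum_sdesc e1 ler_nat in e2.
have e3 : ~: [set x | f x <= c] = [set x | c < f x].
  by apply/setP => x; rewrite !inE ltNge.
have := cardsC [set x | f x <= c]; rewrite e3 card_ord.
lia.
Qed.


Lemma pos_lb (I : finType) (P : pred I) (F : I -> R) :
  (forall i, P i -> 0 < F i) -> exists2 e, 0 < e & forall i, P i -> e <= F i.
Proof.
move=> H; exists (\big[Num.min/1]_(i | P i) F i).
  by apply: (big_ind (fun x => 0 < x)) => // x y hx hy; rewrite lt_min hx hy.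
by move=> i Pi; apply: bigmin_le_cond.
Qed.

Lemma beta_ge0 n (w : 'M[R]_n) i : 0 <= beta w i.
Proof. exact: bigmax_ge_id. Qed.

Lemma beta_ge n (w : 'M[R]_n) i j : w i j - w i i <= beta w i.
Proof. rewrite /beta. set F := fun j => w i j - w i i. rewrite -/(F j).
 by rewrite (bigD1 j) //= le_max lexx.
Qed.


Lemma closure n (w : 'M[R]_n) (s : 'S_n) (p : 'I_n -> R) : is_min_elt_Psigma w s p ->
  forall N : {set 'I_n}, N != setT ->
  exists2 x, x \notin N & (p x = 0 \/ exists2 j, j \in N & w x x + p x <= w x j + p j).
Proof.
move=> [[p0 pP] pmin] N NT.
case: (boolP [exists x, (x \notin N) && ((p x == 0) ||
   [exists j, (j \in N) && (w x x + p x <= w x j + p j)])]).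
  case/existsP => x /andP[xN /orP[/eqP px|/existsP[j /andP[jN h]]]]; exists x => //.
    by left.
  by right; exists j.
rewrite negb_exists => /forallP H.
have HT x : x \notin N -> 0 < p x /\ forall j, j \in N -> w x j + p j < w x x + p x.
  move=> xN; move: (H x); rewrite xN /= negb_or negb_exists => /andP[px0 /forallP Hj].
  split; first by rewrite lt_def px0 p0.
  by move=> j jN; move: (Hj j); rewrite jN /= -ltNge.
set T := ~: N.
have sT x : x \in T -> s x \in T.
  rewrite !inE => xN; apply/negP => sxN.
  have [_ /(_ _ sxN) h2] := HT x xN. have h1 := pP x x.
  by have := lt_le_trans h2 h1; rewrite ltxx.
have sTe : [set s x | x in T] = T.
  apply/eqP; rewrite eqEcard card_imset ?leqnn ?andbT; last exact: perm_inj.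
  by apply/subsetP => y /imsetP[x xT ->]; exact: sT.
have sT' x : s x \in T -> x \in T.
  by rewrite -{1}sTe mem_imset //; exact: perm_inj.
case: (@pos_lb _ (fun xj : 'I_n * 'I_n => (xj.1 \in T) && (xj.2 \in N))
   (fun xj => (w xj.1 (s xj.1) + p (s xj.1)) - (w xj.1 xj.2 + p xj.2))) => [|e1 e1p He1].
  move=> [x j] /= /andP[xT jN]; rewrite subr_gt0; rewrite inE in xT.
  have [_ Hj] := HT x xT; apply: (lt_le_trans (Hj j jN)); exact: pP.
case: (@pos_lb _ (fun x => x \in T) p) => [|e2 e2p He2].
  by move=> x; rewrite inE => xN; case: (HT x xN).
pose e := Num.min e1 e2.
have ee1 : e <= e1 by rewrite ge_min lexx.
have ee2 : e <= e2 by rewrite ge_min lexx orbT.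
have ep : 0 < e by rewrite lt_min e1p e2p.
pose q x := if x \in T then p x - e else p x.
have qP : in_Psigma w s q.
  split.
    move=> x; rewrite /q; case: ifP => xT //.
    have := He2 x xT; lra.
  move=> i j; rewrite /q.
  case: (boolP (i \in T)) => iT.
    rewrite (sT i iT); case: ifP => jT.
      have := pP i j; lra.
    have jN : j \in N by move: jT; rewrite inE => /negbFE.
    have := He1 (i, j); rewrite /= iT jN => /(_ isT); lra.
  have -> : (s i \in T) = false by apply/negP => /sT'; rewrite (negbTE iT).
  case: ifP => _; have := pP i j; lra.
case: (set_0Vmem T) => [T0|[x xT]].
  by move: NT; rewrite -[N]setCK -/T T0 setC0 eqxx.
have := pmin q qP x; rewrite /q xT; lra.
Qed.


Lemma grow n (w : 'M[R]_n) (s : 'S_n) (p : 'I_n -> R) : is_min_elt_Psigma w s p ->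
  forall k, (k <= n)%N -> exists N : {set 'I_n}, exists M : {set 'I_n},
  [/\ #|N| = k, M \subset N, (#|M| <= k.-1)%N &
      forall x, x \in N -> p x <= \sum_(y in M) beta w y].
Proof.
move=> pm; elim=> [_|k IH kn].
  by exists set0, set0; rewrite cards0 sub0set; split=> // x; rewrite inE.
have [N [M [cN MN cM HN]]] := IH (ltnW kn).
have NT : N != setT.
  by apply/negP => /eqP NT; move: kn; rewrite -cN NT cardsT card_ord ltnn.
have [x xN [px0|[j jN hj]]] := closure pm NT.
  exists (x |: N), M; split.
  - by rewrite cardsU1 xN cN.
  - by apply: subset_trans MN _; apply/subsetP => y yN; rewrite inE yN orbT.
  - by apply: leq_trans cM _; case: k {IH kn cN}.
  - move=> y; rewrite !inE => /orP[/eqP->|yN]; last exact: HN.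
    by rewrite px0; apply: sumr_ge0 => z _; exact: beta_ge0.
have xM : x \notin M by apply: contra xN; apply: (subsetP MN).
have k0 : (0 < k)%N by rewrite -cN; apply/card_gt0P; exists j.
exists (x |: N), (x |: M); split.
- by rewrite cardsU1 xN cN.
- by apply/subsetP => y; rewrite !inE => /orP[->|/(subsetP MN)->] //; rewrite orbT.
- by rewrite cardsU1 xM /=; move: cM; case: k k0 {IH kn cN}.
- rewrite big_setU1 //= => y; rewrite !inE => /orP[/eqP->|yN].
    have := HN j jN; have := beta_ge w x j; lra.
  have := HN y yN; have := beta_ge0 w x; lra.
Qed.


Lemma sdesc_ge0 n (f : 'I_n -> R) : (forall i, 0 <= f i) ->
  forall l, 0 <= nth 0 (sort_desc f) l.
Proof.
move=> H l; case: (ltnP l n) => ln; last by rewrite nth_default // size_sdesc.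
have := @mem_nth _ 0 (sort_desc f) l; rewrite size_sdesc => /(_ ln).
by rewrite (perm_mem (sdesc_perm f)) => /mapP[i _ ->].
Qed.

Lemma sum_prefix_mono (g : nat -> R) a b : (a <= b)%N -> (forall l, 0 <= g l) ->
  \sum_(l < a) g l <= \sum_(l < b) g l.
Proof.
move=> ab H; rewrite -(big_mkord xpredT g) -(big_mkord xpredT g).
rewrite [X in _ <= X](big_cat_nat _ (n:=a)) //= lerDl; exact: sumr_ge0.
Qed.

End S.

Unset Implicit Arguments.

Theorem lemma3 (R : realFieldType) (n : nat) (w : 'M[R]_n) (s : 'S_n) (p : 'I_n -> R) :
  (0 < n)%N ->
  is_max_weight_perm w s ->
  is_min_elt_Psigma w s p ->
  forall r : nat, (1 <= r <= n)%N ->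
    nth 0 (sort_desc p) r.-1 <= \sum_(l < n - r) nth 0 (sort_desc (beta w)) l.
Proof.
move=> n0 _ pm r /andP[r1 rn].
have kn : ((n - r).+1 <= n)%N by lia.
have [N [M [cN MN cM HN]]] := grow pm kn.
apply: nth_le => //.
apply: (@leq_trans #|N|); first by rewrite cN.
apply: subset_leq_card; apply/subsetP => x xN; rewrite inE.
apply: (le_trans (HN x xN)); apply: (le_trans (sum_top (beta w) M)).
apply: sum_prefix_mono => //.
by apply: sdesc_ge0 => i; exact: beta_ge0.
Qed.
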